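(* Let $p$ be a prime, $k$ an algebraically closed field of characteristic $p$, $a\in\mathbb N$ and $n\in\mathbb N$. Then the monomial $X^a$ lies in $\Sigma_n$ if and only if $S_p(a)\le n$. Consequently $\min\{n\in\mathbb N:X^a\in\Sigma_n\}=S_p(a)$.
   Context: An additive polynomial in $k[X]$ is a $k$-linear combination of the monomials $X^{p^j}$, $j\ge0$. For $t\ge1$, $\Sigma_t$ is the $k$-subspace of $k[X]$ spanned by $1$ and all products of at most $t$ additive polynomials; $\Sigma_0=k$. For $a\in\mathbb N$ with base-$p$ expansion $a=\sum_{i=0}^t a_ip^i$ ($0\le a_i\le p-1$), $S_p(a)=\sum_i a_i$ is the sum of its base-$p$ digits. *)

(* Defs.v *)
From HB Require Import structures.
From mathcomp Require Import all_boot all_order all_algebra all_field.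
Set Implicit Arguments. Unset Strict Implicit. Unset Printing Implicit Defensive.
Import GRing.Theory.
Local Open Scope ring_scope.

Definition additive_poly (k : fieldType) (p : nat) (f : {poly k}) : Prop :=
  exists c : seq k, f = \sum_(j < size c) c`_j *: 'X^(p ^ j).

(* Sigma_n: the k-span of all products of at most n additive polynomials
   (the empty product is 1, so this contains 1; for n = 0 it is k). *)
Definition in_Sigma (k : fieldType) (p n : nat) (q : {poly k}) : Prop :=
  exists s : seq (k * seq {poly k}),
    (forall x, x \in s -> (size x.2 <= n)%N /\ forall f, f \in x.2 -> additive_poly p f)
    /\ q = \sum_(x <- s) x.1 *: \prod_(f <- x.2) f.

(* Sum of base-p digits of a (valid for p >= 2: digit i is a %/ p^i %% p,
   and digits of index >= a are 0 since p^a > a). *)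
Definition digit_sum (p a : nat) : nat :=
  (\sum_(i < a.+1) (a %/ p ^ i %% p))%N.

(* Main.v *)
Require Import Defs.
From HB Require Import structures.
From Stdlib Require Import Lia.
From mathcomp Require Import all_boot all_order all_algebra all_field.

Ltac slia := repeat match goal with x := _ |- _ => clearbody x end;
  repeat match goal with H : forall _, _ |- _ => clear H end;
  repeat match goal with H : is_true (_ <= _) |- _ => move/leP: H => H end;
  try apply/leP; repeat rewrite <- ?plusE, <- ?multE, <- ?minusE in *; lia.

Section Digits.
Variable p : nat.
Hypothesis p2 : (1 < p)%N.

Lemma ds_ext N m : (m < N)%N ->
  (\sum_(i < N) (m %/ p ^ i %% p))%N = digit_sum p m.
Proof.
move=> mN; rewrite /digit_sum -!(big_mkord xpredT (fun i => m %/ p ^ i %% p)).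
rewrite (@big_cat_nat _ _ _ m.+1 0 N _ _ (leq0n _) mN) /= [X in (_ + X)%N]big1_seq ?addn0 //.
move=> i /andP[_]; rewrite mem_index_iota => /andP[Hi _].
rewrite divn_small ?mod0n //.
apply: (leq_trans (ltn_expl m p2)); by rewrite leq_exp2l // ltnW.
Qed.

Lemma ds0 : digit_sum p 0 = 0%N.
Proof. by rewrite /digit_sum big_ord_recl big_ord0 div0n mod0n. Qed.

Lemma ds_rec a : digit_sum p a = (a %% p + digit_sum p (a %/ p))%N.
Proof.
case: a => [|a]; first by rewrite div0n mod0n ds0.
rewrite {1}/digit_sum big_ord_recl expn0 divn1; congr (_ + _)%N.
rewrite -(@ds_ext a.+1 (a.+1 %/ p)); last by apply: ltn_Pdiv.
by apply: eq_bigr => i _; rewrite /bump /= expnS divnMA.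
Qed.

Lemma ds1 : digit_sum p 1 = 1%N.
Proof. by rewrite ds_rec divn_small // modn_small // ds0. Qed.

Lemma dsexp j : digit_sum p (p ^ j) = 1%N.
Proof.
elim: j => [|j IH]; first exact: ds1.
rewrite ds_rec expnS modnMr mulKn // ltnW //.
Qed.

Lemma ds_sub x y : (digit_sum p (x + y) <= digit_sum p x + digit_sum p y)%N.
Proof.
move: {2}(x + y)%N (leqnn (x + y)) => N; elim: N x y => [|N IH] x y Hxy.
  have -> : (x + y = 0)%N by slia.
  by rewrite ds0.
case: (posnP (x + y)) => [->|Hpos]; first by rewrite ds0.
have p0 : (0 < p)%N by apply: ltnW.
rewrite (ds_rec x) (ds_rec y).
set x1 := (x %/ p)%N; set y1 := (y %/ p)%N; set r := (x %% p)%N; set s := (y %% p)%N.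
have Ex : x = (x1 * p + r)%N by apply: divn_eq.
have Ey : y = (y1 * p + s)%N by apply: divn_eq.
have Hr : (r < p)%N by apply: ltn_pmod.
have Hs : (s < p)%N by apply: ltn_pmod.
have Exy : (x + y = (x1 + y1) * p + (r + s))%N by rewrite Ex Ey mulnDl; slia.
have Hle : (x1 + y1 <= (x1 + y1) * p)%N by rewrite leq_pmulr.
rewrite Exy ds_rec.
case: (ltnP (r + s) p) => Hrs.
  rewrite modnMDl modn_small // divnMDl // divn_small // addn0.
  have Hd : (digit_sum p (x1 + y1) <= digit_sum p x1 + digit_sum p y1)%N.
    apply: IH.
    have Hq : (x1 + y1 < x + y)%N.
      rewrite Exy; case: (posnP (x1 + y1)) => H0.
        by move: Hpos; rewrite Exy H0 mul0n add0n.
      have Hq2 : (x1 + y1 < (x1 + y1) * p)%N by rewrite ltn_Pmulr.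
      slia.
    slia.
  slia.
have Eq : (r + s = 1 * p + (r + s - p))%N. slia.
rewrite Eq addnA -mulnDl modnMDl modn_small; last by slia.
rewrite divnMDl // divn_small ?addn0; last by slia.
have H1 : (digit_sum p (x1 + y1 + 1) <= digit_sum p (x1 + y1) + digit_sum p 1)%N.
  apply: IH; slia.
have H2 : (digit_sum p (x1 + y1) <= digit_sum p x1 + digit_sum p y1)%N.
  apply: IH; slia.
rewrite ds1 in H1.
rewrite addnA; slia.
Qed.

Lemma ds_list a : exists L : seq nat,
  size L = digit_sum p a /\ a = (\sum_(j <- L) p ^ j)%N.
Proof.
elim: a {-2}a (leqnn a) => [|N IH] a Ha.
  exists [::]; have -> : a = 0%N by slia.
  by rewrite ds0 big_nil.
case: (posnP a) => [->|Hpos]; first by exists [::]; rewrite ds0 big_nil.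
have [L [H1 H2]] := IH (a %/ p)%N (leq_trans (ltn_Pdiv p2 Hpos) Ha : (a %/ p <= N)%N).
exists (nseq (a %% p) 0%N ++ map S L); split.
  by rewrite size_cat size_nseq size_map H1 -ds_rec.
rewrite big_cat big_map.
have E1 : forall n, (\sum_(j <- nseq n 0%N) p ^ j)%N = n.
  by elim=> [|n IHn]; rewrite ?big_nil // big_cons IHn expn0 add1n.
have E2 : forall L : seq nat, (\sum_(j <- L) p ^ j.+1 = p * \sum_(j <- L) p ^ j)%N.
  by elim=> [|x L' IHL]; rewrite ?big_nil ?muln0 // !big_cons IHL expnS mulnDr.
rewrite E1 E2 -H2 /= addnC mulnC -divn_eq.
by [].
Qed.

End Digits.

Import GRing.Theory.
Local Open Scope ring_scope.

Section Polys.
Variable k : fieldType.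
Variable p : nat.
Hypothesis p2 : (1 < p)%N.

Definition Pt (t : nat) (q : {poly k}) := forall b, q`_b != 0 -> (digit_sum p b <= t)%N.

Lemma Pt0 t : Pt t 0.
Proof. by move=> b; rewrite coef0 eqxx. Qed.

Lemma PtD t q1 q2 : Pt t q1 -> Pt t q2 -> Pt t (q1 + q2).
Proof.
move=> H1 H2 b; rewrite coefD.
case: (eqVneq q1`_b 0) => [->|/H1 //]; rewrite add0r; exact: H2.
Qed.

Lemma PtZ t c q : Pt t q -> Pt t (c *: q).
Proof. by move=> H b; rewrite coefZ mulf_eq0 negb_or => /andP[_ /H]. Qed.

Lemma PtM t u q1 q2 : Pt t q1 -> Pt u q2 -> Pt (t + u)%N (q1 * q2).
Proof.
move=> H1 H2 b; rewrite coefM => nz.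
case: (pickP (fun i : 'I_b.+1 => q1`_i * q2`_(b - i) != 0)) => [i Hi | H].
  move: Hi; rewrite mulf_eq0 negb_or => /andP[/H1 Ha /H2 Hb].
  have -> : b = (i + (b - i))%N by rewrite subnKC // -ltnS.
  apply: (leq_trans (ds_sub p p2 i (b - i)%N)); exact: leq_add.
move: nz; rewrite big1 ?eqxx // => i _; apply/eqP; move: (H i) => /= /negbFE //.
Qed.

Lemma Pt1 : Pt 0 1.
Proof. move=> b; rewrite coef1; case: (b =P 0%N) => [->|_] /=; first by rewrite ds0.
by rewrite eqxx. Qed.

Lemma PtX j : Pt 1 'X^(p ^ j).
Proof. move=> b; rewrite coefXn; case: (b =P (p ^ j)%N) => [->|_] /=; first by rewrite (dsexp p p2).
by rewrite eqxx. Qed.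

Lemma Ptmono t u q : (t <= u)%N -> Pt t q -> Pt u q.
Proof. by move=> tu H b /H /leq_trans; apply. Qed.

Lemma Ptadd f : additive_poly p f -> Pt 1 f.
Proof.
move=> [c ->]; apply: big_ind; [exact: Pt0 | exact: PtD | move=> i _].
apply: PtZ; exact: PtX.
Qed.

Lemma Ptprod (L : seq {poly k}) : (forall f, f \in L -> additive_poly p f) ->
  Pt (size L) (\prod_(f <- L) f).
Proof.
elim: L => [|f L IH] H; first by rewrite big_nil; exact: Pt1.
rewrite big_cons /= -add1n; apply: PtM.
  by apply: Ptadd; apply: H; rewrite inE eqxx.
by apply: IH => g Hg; apply: H; rewrite inE Hg orbT.
Qed.

Lemma Xadd j : additive_poly p ('X^(p ^ j) : {poly k}).
Proof.
exists (rcons (nseq j 0) 1); rewrite size_rcons size_nseq big_ord_recr /=.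
rewrite nth_rcons size_nseq ltnn eqxx scale1r big1 ?add0r // => i _.
by rewrite nth_rcons size_nseq /= ltn_ord nth_nseq ltn_ord scale0r.
Qed.

Lemma prodX (L : seq nat) : \prod_(j <- L) ('X^(p ^ j) : {poly k}) = 'X^(\sum_(j <- L) p ^ j).
Proof. by elim: L => [|j L IH]; rewrite ?big_nil ?expr0 // !big_cons IH exprD. Qed.

End Polys.

Theorem lemma3p5 (p : nat) (k : closedFieldType) (hp : prime p)
    (hchar : p \in [pchar k]) (a : nat) :
  (forall n : nat, in_Sigma p n ('X^a : {poly k}) <-> (digit_sum p a <= n)%N)
  /\ (in_Sigma p (digit_sum p a) ('X^a : {poly k})
      /\ forall n : nat, in_Sigma p n ('X^a : {poly k}) -> (digit_sum p a <= n)%N).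
Proof.
have p2 : (1 < p)%N by apply: prime_gt1.
have H : forall n : nat, in_Sigma p n ('X^a : {poly k}) <-> (digit_sum p a <= n)%N.
  move=> n; split.
    move=> [s [Hs Eq]].
    have HP : @Pt k p n ('X^a : {poly k}).
      rewrite Eq big_seq; apply: big_ind; [exact: Pt0 | exact: PtD | move=> x Hx].
      have [Hsz Hf] := Hs x Hx.
      apply: PtZ; apply: Ptmono Hsz _; exact: Ptprod.
    by apply: HP; rewrite coefXn eqxx oner_neq0.
  move=> Hn; have [L [HL Ha]] := ds_list p p2 a.
  exists [:: (1, map (fun j => 'X^(p ^ j)) L)]; split.
    move=> x; rewrite inE => /eqP -> /=; split; first by rewrite size_map HL.
    by move=> f /mapP [j _ ->]; apply: Xadd.
  by rewrite big_cons big_nil addr0 scale1r /= big_map prodX -Ha.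
split; first exact: H.
by split; [apply/H | move=> n /H].
Qed.
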